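(* Let $T\ge1$, $K_0=\{x_0\}$ and $K_1,\dots,K_T\subseteq\mathbb R$ compact, $\Omega=K_0\times\dots\times K_T$, and let $\widehat Q$ be a martingale measure on $\Omega$ with marginals $\widehat Q_t$. Let $u_0,\dots,u_T:\mathbb R\to[-\infty,+\infty)$ be concave, upper semicontinuous, nondecreasing with $u_t(0)=0$ and $u_t(x)\le x$ for all $x$. For $\varphi_t\in C_b(K_t)$ define $$U_{\widehat Q_t}(\varphi_t)=\sup_{\alpha,\lambda\in\mathbb R}\Big(\int_{K_t}u_t(\varphi_t(x_t)+\alpha x_t+\lambda)\,d\widehat Q_t(x_t)-(\alpha x_0+\lambda)\Big).$$ Then for each $t=0,\dots,T$: 1. $U_{\widehat Q_t}$ is real valued on $C_b(K_t)$ and $U_{\widehat Q_t}(0)=0$; 2. $U_{\widehat Q_t}$ is concave and nondecreasing; 3. $U_{\widehat Q_t}$ is stock additive on $C_b(K_t)$: $U_{\widehat Q_t}(\varphi_t+\alpha_tX_t+\lambda_t)=U_{\widehat Q_t}(\varphi_t)+\alpha_tx_0+\lambda_t$ for all $\alpha_t,\lambda_t\in\mathbb R$, $\varphi_t\in C_b(K_t)$, where $X_t(x_t)=x_t$.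
   Context: A martingale measure on $\Omega$ is a Borel probability measure under which the canonical process $X_t(x)=x_t$ is a martingale with respect to its natural filtration. $C_b(K_t)$: continuous real functions on $K_t$. *)

(* Defs.v *)
From HB Require Import structures.
From mathcomp Require Import all_boot all_order all_algebra.
From mathcomp Require Import all_classical all_reals all_analysis.
Set Implicit Arguments. Unset Strict Implicit. Unset Printing Implicit Defensive.
Import Order.TTheory GRing.Theory Num.Theory.
Import numFieldNormedType.Exports.
Local Open Scope classical_set_scope.
Local Open Scope ring_scope.

(* Paths (x_0, ..., x_T) are functions 'I_T.+1 -> R; the sigma-algebra is the
   one generated by the coordinate maps (= Borel sigma-algebra of R^(T+1)). *)
Definition coord_gen (R : realType) (T : nat) : set (set ('I_T.+1 -> R)) :=
  [set A | exists (s : 'I_T.+1) (B : set R),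
      measurable B /\ A = (fun w : 'I_T.+1 -> R => w s) @^-1` B].

Definition path_space (R : realType) (T : nat) := g_sigma_algebraType (@coord_gen R T).

Definition canX (R : realType) (T : nat) (t : 'I_T.+1) : path_space R T -> R :=
  fun w => w t.

Definition nat_filtration (R : realType) (T : nat) (t : 'I_T.+1)
  : set (set (path_space R T)) :=
  <<s [set A | exists (s : 'I_T.+1) (B : set R),
      (s <= t)%N /\ measurable B /\ A = canX s @^-1` B] >>.

(* P is a martingale measure on Omega = K_0 x ... x K_T:
   P is carried by Omega, and the canonical process is an (integrable)
   martingale w.r.t. its natural filtration. *)
Definition martingale_measure (R : realType) (T : nat) (K : 'I_T.+1 -> set R)
  (P : probability (path_space R T) R) : Prop :=
  P [set w : path_space R T | forall t, K t (w t)] = 1%E /\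
  (forall t : 'I_T.+1, P.-integrable setT (fun w => (canX t w)%:E)) /\
  (forall s t : 'I_T.+1, nat_of_ord t = (nat_of_ord s).+1 ->
     forall A, nat_filtration s A ->
       (\int[P]_(w in A) (canX t w)%:E = \int[P]_(w in A) (canX s w)%:E)%E).

Definition marginal (R : realType) (T : nat) (P : probability (path_space R T) R)
  (t : 'I_T.+1) : set R -> \bar R :=
  pushforward P (canX t).

Definition econcave (R : realType) (u : R -> \bar R) : Prop :=
  forall (x y s : R), (0 < s < 1)%R ->
    (s%:E * u x + (1 - s)%:E * u y <= u (s * x + (1 - s) * y)%R)%E.

Definition eusc (R : realType) (u : R -> \bar R) : Prop :=
  forall (x r : R), (u x < r%:E)%E -> \forall y \near x, (u y < r%:E)%E.

Definition enondecreasing (R : realType) (u : R -> \bar R) : Prop :=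
  forall x y : R, (x <= y)%R -> (u x <= u y)%E.

Definition Ustock (R : realType) (Q : set R -> \bar R) (K : set R)
  (u : R -> \bar R) (x0 : R) (phi : R -> R) : \bar R :=
  ereal_sup [set (\int[Q]_(x in K) u (phi x + a * x + l)%R - (a * x0 + l)%R%:E)%E
            | a in [set: R] & l in [set: R]].

(* Main.v *)
Require Import Defs.
From HB Require Import structures.
From mathcomp Require Import all_boot all_order all_algebra.
From mathcomp Require Import all_classical all_reals all_analysis.
From mathcomp Require Import measurable_realfun.
From mathcomp Require Import ring lra.
Import Order.TTheory GRing.Theory Num.Theory.
Import numFieldNormedType.Exports.
Local Open Scope classical_set_scope.
Local Open Scope ring_scope.

Section Marg.
Local Open Scope ereal_scope.
Context (R : realType) (T : nat) (P : probability (path_space R T) R).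

Lemma canX_meas (t : 'I_T.+1) : measurable_fun setT (canX (R:=R) t).
Proof.
move=> _ B mB; rewrite setTI; apply: sub_sigma_algebra.
by exists t, B.
Qed.

Variable t : 'I_T.+1.

Let m0 : marginal P t set0 = 0.
Proof. by rewrite /marginal /pushforward preimage_set0 measure0. Qed.

Let mge0 A : 0 <= marginal P t A.
Proof. rewrite /marginal /pushforward. apply: measure_ge0. Qed.

Let msig : semi_sigma_additive (marginal P t).
Proof.
move=> F mF tF mUF; rewrite /marginal /pushforward preimage_bigcup.
apply: measure_semi_sigma_additive.
- by move=> n; rewrite -[X in measurable X]setTI; exact: canX_meas.
- apply/trivIsetP => /= i j _ _ ij; rewrite -preimage_setI.
  by move/trivIsetP : tF => /(_ _ _ _ _ ij) ->//; rewrite preimage_set0.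
- by rewrite -preimage_bigcup -[X in measurable X]setTI; exact: canX_meas.
Qed.

HB.instance Definition _ := isMeasure.Build _ _ _ (marginal P t) m0 mge0 msig.
End Marg.


Section Mart.
Local Open Scope ereal_scope.
Context (R : realType) (T : nat) (x0 : R) (K : 'I_T.+1 -> set R)
  (P : probability (path_space R T) R).
Hypotheses (K0 : K ord0 = [set x0]) (cK : forall t, compact (K t))
  (mm : martingale_measure K P).

Lemma mKl t : measurable (K t).
Proof. exact: compact_measurable. Qed.

Lemma Omega_meas : measurable [set w : path_space R T | forall t, K t (w t)].
Proof.
have -> : [set w : path_space R T | forall t, K t (w t)] =
   \bigcap_(i in [set i | (i < T.+1)%N]) (canX (R:=R) (inord i) @^-1` K (inord i)).
  apply/seteqP; split => w /=.
    by move=> Hw i _; exact: Hw.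
  move=> Hw t; have := Hw (val t) (ltn_ord t); by rewrite /canX inord_val.
apply: bigcap_measurableType => i _.
by rewrite -[X in measurable X]setTI; apply: (@canX_meas R T) => //; exact: mKl.
Qed.

Lemma PK t : P (canX (R:=R) t @^-1` K t) = 1.
Proof.
case: mm => PO _.
have mX : measurable (canX (R:=R) t @^-1` K t).
  by rewrite -[X in measurable X]setTI; apply: (@canX_meas R T) => //; exact: mKl.
apply/eqP; rewrite eq_le probability_le1 //=.
rewrite -PO le_measure // ?inE //; first exact: Omega_meas.
by move=> w /= Hw; exact: Hw.
Qed.

Lemma int_marg t (f : R -> \bar R) : measurable_fun setT f ->
  P.-integrable setT (f \o canX (R:=R) t) ->
  \int[P]_(w in setT) f (canX t w) = \int[marginal P t]_(x in K t) f x.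
Proof.
move=> mf intf.
have intf' : P.-integrable (canX (R:=R) t @^-1` setT) (f \o canX (R:=R) t).
  by rewrite preimage_setT.
have := @integral_pushforward _ _ _ _ R (canX (R:=R) t) (@canX_meas R T t) P setT f mf intf' measurableT.
rewrite preimage_setT => <-.
rewrite (@negligible_integral _ _ _ (marginal P t) setT (~` K t) f).
- by rewrite setTD setCK.
- apply: measurableC; exact: mKl.
- exact: measurableT.
- exact: (@integrable_pushforward _ _ _ _ R (canX (R:=R) t) (@canX_meas R T t) P setT f mf intf' measurableT).
- rewrite /marginal /pushforward /=.
  change (P (canX (R:=R) t @^-1` (~` K t)) = 0).
  rewrite preimage_setC probability_setC ?PK ?subee //.
  by rewrite -[X in measurable X]setTI; apply: (@canX_meas R T) => //; exact: mKl.
Qed.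

Lemma intX t : P.-integrable setT (fun w => (canX (R:=R) t w)%:E).
Proof. by case: mm => _ []. Qed.

Lemma E0 : \int[P]_(w in setT) (canX (R:=R) ord0 w)%:E = x0%:E.
Proof.
rewrite (@int_marg ord0 EFin (@EFin_measurable R setT) (intX ord0)).
  rewrite K0 (eq_integral (fun=> x0%:E)); last by move=> x; rewrite inE => ->.
  rewrite (@integral_cst _ _ _ (marginal P ord0) [set x0] (measurable_set1 x0)).
  rewrite -K0.
  rewrite [X in _ * X](_ : _ = 1); first by rewrite mule1.
  exact: PK.

Qed.

Lemma En (n : nat) : (n < T.+1)%N ->
  \int[P]_(w in setT) (canX (R:=R) (inord n) w)%:E = x0%:E.
Proof.
elim: n => [_|n IH hn].
  by rewrite -E0; congr integral; apply/funext => w; rewrite /canX; congr (w _ )%:E; apply: val_inj; rewrite /= inordK.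
case: mm => _ [_ mart].
rewrite -IH; last by apply: ltn_trans hn.
apply: (mart (inord n) (inord n.+1)).
  by rewrite !inordK // (ltn_trans _ hn).
apply: sub_sigma_algebra; exists (inord n), setT; split => //.
Qed.

Lemma Et t : \int[P]_(w in setT) (canX (R:=R) t w)%:E = x0%:E.
Proof.
by rewrite -(En _ (ltn_ord t)) inord_val.
Qed.

Lemma margK t : marginal P t (K t) = 1.
Proof. by rewrite /marginal /pushforward PK. Qed.

Lemma margInt t : (marginal P t).-integrable (K t) EFin.
Proof.
apply: (@integrableS _ _ _ _ setT) => //; first exact: mKl.
have intf' : P.-integrable (canX (R:=R) t @^-1` setT) (EFin \o canX (R:=R) t).
  by rewrite preimage_setT; exact: intX.
have := (@integrable_pushforward _ _ _ _ R (canX (R:=R) t) (@canX_meas R T t) P setT EFin (@EFin_measurable R setT) intf' measurableT).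
exact.
Qed.

Lemma margE t : \int[marginal P t]_(x in K t) x%:E = x0%:E.
Proof.
by rewrite -(Et t) (@int_marg t EFin (@EFin_measurable R setT) (intX t)).
Qed.
End Mart.

Section Main.
Local Open Scope ereal_scope.
Context (R : realType) (Q : {measure set R -> \bar R}) (K : set R) (x0 : R)
  (v : R -> \bar R).
Hypotheses (mK : measurable K) (cK : compact K) (QK1 : Q K = 1)
  (Qi : Q.-integrable K EFin) (QE : \int[Q]_(x in K) x%:E = x0%:E)
  (vc : econcave v) (vusc : eusc v) (vnd : enondecreasing v) (v0 : v 0%R = 0)
  (vle : forall x, v x <= x%:E).

Lemma le_int_meas (f g : R -> \bar R) : measurable_fun K f -> measurable_fun K g ->
  (forall x, K x -> f x <= g x) -> \int[Q]_(x in K) f x <= \int[Q]_(x in K) g x.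
Proof.
move=> mf mg fg.
have fg' : {in K, forall x, f x <= g x} by move=> y /set_mem; exact: fg.
rewrite integralE [leRHS]integralE leeB//.
- apply: ge0_le_integral => //; try exact: measurable_funepos.
  by move=> x Kx; exact: funepos_le fg' _ (mem_set Kx).
- apply: ge0_le_integral => //; try exact: measurable_funeneg.
  by move=> x Kx; exact: funeneg_le fg' _ (mem_set Kx).
Qed.

Lemma int_fin (f g : R -> \bar R) : measurable_fun K f -> Q.-integrable K g ->
  (forall x, K x -> f x <= g x) -> \int[Q]_(x in K) f x != -oo ->
  Q.-integrable K f.
Proof.
move=> mf ig fg fn; apply/integrableP; split => //.
apply/(@abse_integralP _ _ _ Q K f mK mf); rewrite -fin_num_abs fin_numE fn /=.
have [mg _] := integrableP _ _ _ ig.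
apply/negP => /eqP fy.
have := le_int_meas _ _ mf mg fg; rewrite fy leye_eq => /eqP gy.
have := @le_abse_integral _ _ _ Q K g mK mg; rewrite gy /=.
by case/integrableP: ig => _ /lt_le_trans /[apply]; rewrite ltxx.
Qed.

Lemma cont_meas (phi : R -> R) : {within K, continuous phi} -> measurable_fun K phi.
Proof. by move=> c; exact: (subspace_continuous_measurable_fun mK c). Qed.

Lemma cont_bnd (phi : R -> R) : {within K, continuous phi} ->
  exists M : R, forall x, K x -> (`|phi x| <= M)%R.
Proof.
move=> c; have := compact_bounded (continuous_compact c cK).
move=> [M [_ HM]]; exists (M + 1)%R => x Kx.
by apply: (HM (M + 1)%R); [rewrite ltrDl | exists x].
Qed.

Lemma v_meas : measurable_fun setT v.
Proof.
have lsc : lower_semicontinuous (fun x => - v x).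
  move=> x a; rewrite lteNr => /vusc hx.
  exists [set y | v y < (- a)%:E]; first exact: hx.
  by move=> y /=; rewrite lteNr.
have := measurableT_comp (@oppe_measurable R setT) (lower_semicontinuous_measurable lsc).
by apply: eq_measurable_fun => x _ /=; rewrite oppeK.
Qed.

Lemma cst_int c : Q.-integrable K (fun _ => c%:E).
Proof.
apply/integrableP; split; first exact: measurable_cst.
by rewrite integral_cst // QK1 mule1 ltry.
Qed.

Lemma lin_int a c : Q.-integrable K (fun x => (a * x + c)%:E).
Proof.
apply: (@eq_integrable _ _ _ Q K mK (fun x => a%:E * x%:E + c%:E)).
  by move=> x _; rewrite EFinD EFinM.
by apply: integrableD => //; [exact: integrableZl | exact: cst_int].
Qed.

Lemma lin_E a c : \int[Q]_(x in K) (a * x + c)%:E = (a * x0 + c)%:E.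
Proof.
rewrite (eq_integral (fun x => a%:E * x%:E + c%:E)); last first.
  by move=> x _; rewrite EFinD EFinM.
rewrite integralD //; [|exact: integrableZl|exact: cst_int].
by rewrite integralZl // QE integral_cst // QK1 mule1 -EFinM -EFinD.
Qed.

Lemma int_meas (phi : R -> R) : measurable_fun K phi -> forall a l : R,
  measurable_fun K (fun x => v (phi x + a * x + l)%R).
Proof.
move=> mphi a l; apply: measurableT_comp; first exact: v_meas.
apply: measurable_funD; last exact: measurable_cst.
by apply: measurable_funD => //; exact: mulrl_measurable.
Qed.

Definition F (phi : R -> R) (a l : R) := \int[Q]_(x in K) v (phi x + a * x + l)%R - (a * x0 + l)%:E.

Lemma UE (phi : R -> R) : Ustock Q K v x0 phi = ereal_sup [set F phi a l | a in [set: R] & l in [set: R]].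
Proof. by []. Qed.

Lemma F_le (phi : R -> R) (M : R) : measurable_fun K phi -> (forall x, K x -> phi x <= M)%R ->
  forall a l, F phi a l <= M%:E.
Proof.
move=> mphi phiM a l; rewrite /F leeBlDr //.
have h1 : measurable_fun K (fun x => (a * x + (M + l))%:E).
  by case/integrableP: (lin_int a (M + l)).
have := le_int_meas _ _ (int_meas phi mphi a l) h1.
have h2 : forall x : R, K x -> v (phi x + a * x + l)%R <= (a * x + (M + l))%:E.
  move=> x Kx; apply: le_trans (vle _) _; rewrite lee_fin.
  by have := phiM x Kx; lra.
move=> /(_ h2) /le_trans; apply.
by rewrite lin_E -EFinD lee_fin; lra.
Qed.

Lemma F_ge (phi : R -> R) (M : R) : (forall x, K x -> -M <= phi x)%R -> (-M)%:E <= F phi 0 M.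
Proof.
move=> phiM; rewrite /F mul0r add0r EFinN -[X in X <= _]add0e.
apply: leeD => //; apply: integral_ge0 => x Kx; rewrite -v0; apply: vnd.
by rewrite mul0r addr0; have := phiM x Kx; lra.
Qed.


Lemma U_ub (phi : R -> R) (M : R) : measurable_fun K phi ->
  (forall x, K x -> phi x <= M)%R -> Ustock Q K v x0 phi <= M%:E.
Proof.
move=> mphi phiM; rewrite UE; apply: ge_ereal_sup => _ [a _ [l _ <-]].
exact: F_le.
Qed.

Lemma U_lb (phi : R -> R) (M : R) :
  (forall x, K x -> -M <= phi x)%R -> (-M)%:E <= Ustock Q K v x0 phi.
Proof.
move=> phiM; rewrite UE; apply: le_trans (F_ge _ _ phiM) _.
by apply: ereal_sup_ubound; exists 0%R => //; exists M.
Qed.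

Lemma U_fin (phi : R -> R) : {within K, continuous phi} ->
  Ustock Q K v x0 phi \is a fin_num.
Proof.
move=> c; have [M HM] := cont_bnd _ c.
rewrite fin_numElt; apply/andP; split.
  apply: lt_le_trans (U_lb phi M _); first exact: ltNyr.
  by move=> x Kx; have := HM x Kx; rewrite ler_norml => /andP[].
apply: le_lt_trans (U_ub phi M (cont_meas _ c) _) _; last exact: ltry.
by move=> x Kx; have := HM x Kx; rewrite ler_norml => /andP[].
Qed.

Lemma U0 : Ustock Q K v x0 (fun _ => 0%R) = 0.
Proof.
apply/le_anti/andP; split.
  by apply: (U_ub _ 0%R); [exact: measurable_cst|].
rewrite UE; apply: ereal_sup_ubound; exists 0%R => //; exists 0%R => //.
rewrite /F mul0r addr0 sube0.
rewrite (eq_integral (fun _ => 0)); first by rewrite integral0.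
by move=> x _; rewrite mul0r !addr0.
Qed.

Lemma U_mono (phi psi : R -> R) :
  {within K, continuous phi} -> {within K, continuous psi} ->
  (forall x, K x -> phi x <= psi x)%R ->
  Ustock Q K v x0 phi <= Ustock Q K v x0 psi.
Proof.
move=> cphi cpsi le; rewrite !UE; apply: ge_ereal_sup => _ [a _ [l _ <-]].
apply: le_trans (_ : F psi a l <= _); last first.
  by apply: ereal_sup_ubound; exists a => //; exists l.
rewrite /F leeB //; apply: le_int_meas.
- exact: (int_meas _ (cont_meas _ cphi)).
- exact: (int_meas _ (cont_meas _ cpsi)).
move=> x Kx; apply: vnd; by have := le x Kx; lra.
Qed.

Lemma U_stock (phi : R -> R) (a l : R) :
  Ustock Q K v x0 (fun x => phi x + a * x + l)%R =
  Ustock Q K v x0 phi + (a * x0 + l)%:E.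
Proof.
have key : forall b m, F (fun x => phi x + a * x + l)%R b m =
    F phi (a + b) (l + m) + (a * x0 + l)%:E.
  move=> b m; rewrite /F (eq_integral (fun x => v (phi x + (a + b) * x + (l + m))%R)); last first.
    by move=> x _; congr v; ring.
  rewrite -addeA; congr (_ + _); rewrite -EFinN -EFinD; congr EFin; ring.
apply/le_anti/andP; split.
  rewrite UE; apply: ge_ereal_sup => _ [b _ [m _ <-]].
  rewrite key; apply: leeD => //.
  by rewrite UE; apply: ereal_sup_ubound; exists (a + b)%R => //; exists (l + m)%R.
rewrite -leeBrDr // [X in _ <= X - _]UE; apply: ge_ereal_sup => _ [b _ [m _ <-]].
rewrite leeBrDr // -/(F phi b m).
have -> : F phi b m = F phi (a + (b - a)) (l + (m - l)).
  by congr F; ring.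
rewrite -key; apply: ereal_sup_ubound; exists (b - a)%R => //; exists (m - l)%R => //.
Qed.


Lemma f_int (phi : R -> R) (a l : R) : {within K, continuous phi} ->
  \int[Q]_(x in K) v (phi x + a * x + l)%R \is a fin_num ->
  Q.-integrable K (fun x => v (phi x + a * x + l)%R).
Proof.
move=> c fin; have [M HM] := cont_bnd _ c.
apply: (int_fin _ (fun x => (a * x + (M + l))%:E)).
- exact: (int_meas _ (cont_meas _ c)).
- exact: lin_int.
- move=> x Kx; apply: le_trans (vle _) _; rewrite lee_fin.
  by have := HM x Kx; rewrite ler_norml => /andP[_]; lra.
- by move: fin; rewrite fin_numE => /andP[].
Qed.

Lemma U_conc (phi psi : R -> R) (s : R) :
  {within K, continuous phi} -> {within K, continuous psi} -> (0 <= s <= 1)%R ->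
  s%:E * Ustock Q K v x0 phi + (1 - s)%:E * Ustock Q K v x0 psi
  <= Ustock Q K v x0 (fun x => s * phi x + (1 - s) * psi x)%R.
Proof.
move=> cphi cpsi /andP[s0 s1].
have fp := U_fin _ cphi; have fq := U_fin _ cpsi.
have [->|sn0] := eqVneq s 0%R.
  have -> : (fun x => 0 * phi x + (1 - 0) * psi x)%R = psi.
    by apply/funext => x /=; ring.
  by rewrite mul0e add0e subr0 mul1e.
have [->|sn1] := eqVneq s 1%R.
  have -> : (fun x => 1 * phi x + (1 - 1) * psi x)%R = phi.
    by apply/funext => x /=; ring.
  by rewrite subrr mul0e adde0 mul1e.
have s0' : (0 < s)%R by rewrite lt_neqAle eq_sym sn0.
have s1' : (s < 1)%R by rewrite lt_neqAle sn1.
set chi := (fun x => s * phi x + (1 - s) * psi x)%R.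
have mphi := cont_meas _ cphi; have mpsi := cont_meas _ cpsi.
have mchi : measurable_fun K chi.
  by apply: measurable_funD; apply: measurable_funM => //; exact: measurable_cst.
have key : forall a1 l1 a2 l2, F phi a1 l1 \is a fin_num -> F psi a2 l2 \is a fin_num ->
    s%:E * F phi a1 l1 + (1 - s)%:E * F psi a2 l2 <=
    F chi (s * a1 + (1 - s) * a2) (s * l1 + (1 - s) * l2).
  move=> a1 l1 a2 l2 fin1 fin2.
  have I1f : \int[Q]_(x in K) v (phi x + a1 * x + l1)%R \is a fin_num.
    by move: fin1; rewrite /F fin_numB => /andP[].
  have I2f : \int[Q]_(x in K) v (psi x + a2 * x + l2)%R \is a fin_num.
    by move: fin2; rewrite /F fin_numB => /andP[].
  have i1 := f_int _ _ _ cphi I1f; have i2 := f_int _ _ _ cpsi I2f.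
  have i12 : Q.-integrable K (fun x => s%:E * v (phi x + a1 * x + l1)%R +
                                       (1 - s)%:E * v (psi x + a2 * x + l2)%R).
    by apply: integrableD => //; exact: integrableZl.
  have H3 : s%:E * (\int[Q]_(x in K) v (phi x + a1 * x + l1)%R) +
             (1 - s)%:E * (\int[Q]_(x in K) v (psi x + a2 * x + l2)%R) <=
            \int[Q]_(x in K) v (chi x + (s * a1 + (1 - s) * a2) * x + (s * l1 + (1 - s) * l2))%R.
    have := le_int_meas _ _ (measurable_int _ i12)
      (int_meas _ mchi (s * a1 + (1 - s) * a2) (s * l1 + (1 - s) * l2)).
    rewrite integralD //; [|exact: integrableZl|exact: integrableZl].
    rewrite !integralZl //; apply.
    move=> x Kx; have := vc (phi x + a1 * x + l1)%R (psi x + a2 * x + l2)%R s.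
    rewrite s0' s1' => /(_ isT) /le_trans; apply.
    by rewrite /chi; rewrite le_eqVlt; apply/orP; left; apply/eqP; congr v; ring.
  move: H3; rewrite /F -(fineK I1f) -(fineK I2f) -!EFinB -!EFinM -!EFinD => H3.
  rewrite leeBrDr // -EFinD; apply: le_trans H3; rewrite lee_fin le_eqVlt; apply/orP; left; apply/eqP; ring.
have fa0 a1 l1 : F phi a1 l1 <= Ustock Q K v x0 phi.
  by rewrite UE; apply: ereal_sup_ubound; exists a1 => //; exists l1.
have fb0 a2 l2 : F psi a2 l2 <= Ustock Q K v x0 psi.
  by rewrite UE; apply: ereal_sup_ubound; exists a2 => //; exists l2.
have fc0 a3 l3 : F chi a3 l3 <= Ustock Q K v x0 chi.
  by rewrite UE; apply: ereal_sup_ubound; exists a3 => //; exists l3.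
rewrite !UE in fp fq fa0 fb0 fc0 *.
apply/lee_addgt0Pr => e e0.
have [_ [a1 _ [l1 _ <-]] lta] := ub_ereal_sup_adherent e0 fp.
have [_ [a2 _ [l2 _ <-]] ltb] := ub_ereal_sup_adherent e0 fq.
have fa := fa0 a1 l1; have fb := fb0 a2 l2.
have fina : F phi a1 l1 \is a fin_num.
  rewrite fin_numElt; apply/andP; split.
    by apply: lt_trans _ lta; rewrite -(fineK fp) -EFinB; exact: ltNyr.
  by apply: le_lt_trans fa _; move: fp; rewrite fin_numElt => /andP[].
have finb : F psi a2 l2 \is a fin_num.
  rewrite fin_numElt; apply/andP; split.
    by apply: lt_trans _ ltb; rewrite -(fineK fq) -EFinB; exact: ltNyr.
  by apply: le_lt_trans fb _; move: fq; rewrite fin_numElt => /andP[].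
have fc := fc0 (s * a1 + (1 - s) * a2)%R (s * l1 + (1 - s) * l2)%R.
apply: le_trans (leeD (le_trans (key _ _ _ _ fina finb) fc) (lexx e%:E)).
move: lta ltb; rewrite -(fineK fp) -(fineK fq) -(fineK fina) -(fineK finb).
rewrite -!EFinB !lte_fin -!EFinM -!EFinD lee_fin => ha hb.
have h1 : (0 < s * (fine (F phi a1 l1) - (fine (ereal_sup [set F phi a l | a in [set: R] & l in [set: R]]) - e)))%R.
  by apply: mulr_gt0 => //; lra.
have h2 : (0 < (1 - s) * (fine (F psi a2 l2) - (fine (ereal_sup [set F psi a l | a in [set: R] & l in [set: R]]) - e)))%R.
  by apply: mulr_gt0 => //; lra.
lra.
Qed.

Lemma main_generic : let U := Ustock Q K v x0 in
    ((forall phi : R -> R, {within K, continuous phi} -> U phi \is a fin_num) /\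
     U (fun _ => 0%R) = 0%E) /\
    ((forall (phi psi : R -> R) (s : R),
        {within K, continuous phi} -> {within K, continuous psi} ->
        (0 <= s <= 1)%R ->
        (s%:E * U phi + (1 - s)%:E * U psi
           <= U (fun x => (s * phi x + (1 - s) * psi x)%R))%E) /\
     (forall phi psi : R -> R,
        {within K, continuous phi} -> {within K, continuous psi} ->
        (forall x, K x -> (phi x <= psi x)%R) -> (U phi <= U psi)%E)) /\
    (forall (phi : R -> R) (a l : R), {within K, continuous phi} ->
        U (fun x => phi x + a * x + l)%R = (U phi + (a * x0 + l)%R%:E)%E).
Proof.
move=> U; split; [split|split; [split|]].
- exact: U_fin.
- exact: U0.
- exact: U_conc.
- exact: U_mono.
- by move=> phi a l _; exact: U_stock.
Qed.
End Main.

Theorem lemma4p2 (R : realType) (T : nat) (x0 : R) (K : 'I_T.+1 -> set R)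
  (P : probability (path_space R T) R) (u : 'I_T.+1 -> R -> \bar R) :
  (1 <= T)%N ->
  K ord0 = [set x0] ->
  (forall t, compact (K t)) ->
  martingale_measure K P ->
  (forall t, econcave (u t)) ->
  (forall t, eusc (u t)) ->
  (forall t, enondecreasing (u t)) ->
  (forall t, u t 0 = 0%E) ->
  (forall t x, (u t x <= x%:E)%E) ->
  forall t : 'I_T.+1,
    let U := Ustock (marginal P t) (K t) (u t) x0 in
    (* 1. real valued on C_b(K_t), and U(0) = 0 *)
    ((forall phi : R -> R, {within K t, continuous phi} -> U phi \is a fin_num) /\
     U (fun _ => 0) = 0%E) /\
    (* 2. concave and nondecreasing on C_b(K_t) *)
    ((forall (phi psi : R -> R) (s : R),
        {within K t, continuous phi} -> {within K t, continuous psi} ->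
        (0 <= s <= 1)%R ->
        (s%:E * U phi + (1 - s)%:E * U psi
           <= U (fun x => (s * phi x + (1 - s) * psi x)%R))%E) /\
     (forall phi psi : R -> R,
        {within K t, continuous phi} -> {within K t, continuous psi} ->
        (forall x, K t x -> (phi x <= psi x)%R) -> (U phi <= U psi)%E)) /\
    (* 3. stock additivity *)
    (forall (phi : R -> R) (a l : R), {within K t, continuous phi} ->
        U (fun x => phi x + a * x + l) = (U phi + (a * x0 + l)%R%:E)%E).
Proof.
move=> _ K0 cK mm uc uusc und u0 ule t.
exact (@main_generic R (marginal P t) (K t) x0 (u t) (@mKl _ _ _ cK t) (cK t)
  (@margK _ _ _ _ cK mm t) (@margInt _ _ _ _ cK mm t)
  (@margE _ _ _ _ _ K0 cK mm t) (uc t) (uusc t) (und t) (u0 t) (ule t)).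
Qed.
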